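(* Let $\boldsymbol{\Xi} \in \mathbb{R}^{6\times 3}$ be a matrix whose columns are written as $\boldsymbol{\xi}_j = \begin{pmatrix}\boldsymbol{\alpha}_j \\ \boldsymbol{\beta}_j\end{pmatrix}$, $j=1,2,3$, with $\boldsymbol{\alpha}_j,\boldsymbol{\beta}_j\in\mathbb{R}^3$, so that $\boldsymbol{\Xi} = \begin{bmatrix}\boldsymbol{\alpha}_1 & \boldsymbol{\alpha}_2 & \boldsymbol{\alpha}_3\\ \boldsymbol{\beta}_1 & \boldsymbol{\beta}_2 & \boldsymbol{\beta}_3\end{bmatrix}$. Suppose $$\Vert\boldsymbol{\alpha}_1\Vert \neq 0 \quad\text{and}\quad \boldsymbol{\alpha}_1\times\boldsymbol{\alpha}_2 \neq \boldsymbol{0}.$$ Then there exist a unique screw-transformation matrix $$\boldsymbol{S} = \begin{bmatrix}\boldsymbol{R} & \boldsymbol{0}\\ [\boldsymbol{p}]_\times \boldsymbol{R} & \boldsymbol{R}\end{bmatrix},\qquad \boldsymbol{R}\in SO(3),\ \boldsymbol{p}\in\mathbb{R}^3,$$ and a unique matrix $\boldsymbol{U}\in\mathbb{R}^{6\times 3}$ of the form $$\boldsymbol{U} = \begin{bmatrix}\boldsymbol{U}_1\\ \boldsymbol{U}_2\end{bmatrix} = \begin{bmatrix} u_{11} & u_{12} & u_{13}\\ 0 & u_{22} & u_{23}\\ 0 & 0 & u_{33}\\ u_{41} & u_{42} & u_{43}\\ 0 & u_{52} & u_{53}\\ 0 & 0 & u_{63}\end{bmatrix}$$ (i.e. $\boldsymbol{U}_1,\boldsymbol{U}_2$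 are $3\times 3$ upper-triangular) with $u_{11}>0$ and $u_{22}>0$, such that $\boldsymbol{\Xi} = \boldsymbol{S}\,\boldsymbol{U}$.
   Context: For $\boldsymbol{a}\in\mathbb{R}^3$, $[\boldsymbol{a}]_\times$ denotes the $3\times 3$ skew-symmetric matrix with $[\boldsymbol{a}]_\times \boldsymbol{b} = \boldsymbol{a}\times\boldsymbol{b}$ for all $\boldsymbol{b}\in\mathbb{R}^3$. A screw-transformation matrix is a $6\times 6$ matrix of the form $\begin{bmatrix}\boldsymbol{R} & \boldsymbol{0}\\ [\boldsymbol{p}]_\times\boldsymbol{R} & \boldsymbol{R}\end{bmatrix}$ with $\boldsymbol{R}$ a $3\times3$ rotation matrix (orthogonal, determinant $+1$) and $\boldsymbol{p}\in\mathbb{R}^3$. A factorization $\boldsymbol{\Xi}=\boldsymbol{S}\boldsymbol{U}$ as in the claim is called an $SU$-decomposition. *)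

(* Defs.v *)
From HB Require Import structures.
From mathcomp Require Import all_boot all_order all_algebra.
Set Implicit Arguments. Unset Strict Implicit. Unset Printing Implicit Defensive.
Import Order.TTheory GRing.Theory Num.Theory.
Local Open Scope ring_scope.

Section Defs.
Variable R : rcfType.

Definition vnorm (a : 'cV[R]_3) : R := Num.sqrt (\sum_(i < 3) a i 0 ^+ 2).

Definition crossv (a b : 'cV[R]_3) : 'cV[R]_3 :=
  \col_(i < 3)
    (if i == 0 :> nat then a 1 0 * b 2%:R 0 - a 2%:R 0 * b 1 0
     else if i == 1 :> nat then a 2%:R 0 * b 0 0 - a 0 0 * b 2%:R 0
     else a 0 0 * b 1 0 - a 1 0 * b 0 0).

(* [a]_x : the skew-symmetric matrix with [a]_x b = a x b *)
Definition skew (a : 'cV[R]_3) : 'M[R]_3 :=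
  \matrix_(i < 3, j < 3) crossv a (delta_mx j 0) i 0.

Definition is_rotation (Q : 'M[R]_3) : Prop :=
  Q^T *m Q = 1%:M /\ \det Q = 1.

Definition screw_mx (Q : 'M[R]_3) (p : 'cV[R]_3) : 'M[R]_(3 + 3) :=
  block_mx Q 0 (skew p *m Q) Q.

Definition is_screw (S : 'M[R]_(3 + 3)) : Prop :=
  exists (Q : 'M[R]_3) (p : 'cV[R]_3), is_rotation Q /\ S = screw_mx Q p.

Definition upper_tri (M : 'M[R]_3) : Prop :=
  forall i j : 'I_3, (j < i)%N -> M i j = 0.

Definition is_U_form (U : 'M[R]_(3 + 3, 3)) : Prop :=
  upper_tri (usubmx U) /\ upper_tri (dsubmx U) /\
  0 < usubmx U 0 0 /\ 0 < usubmx U 1 1.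

End Defs.

(* Main.v *)
Require Import Defs.
From mathcomp Require Import all_boot all_order all_algebra.
From mathcomp Require Import ring lra.
Import Order.TTheory GRing.Theory Num.Theory.
Local Open Scope ring_scope.
Set Implicit Arguments. Unset Strict Implicit. Unset Printing Implicit Defensive.
Section S.
Variable R : rcfType.
Lemma ord3 (i : 'I_3) : i = 0 \/ i = 1 \/ i = 2%:R.
Proof. case: i => [[|[|[|m]]] Hi]; [left|right;left|right;right|by []]; exact/val_inj. Qed.
Lemma sum3 (F : 'I_3 -> R) : \sum_(i < 3) F i = F 0 + F 1 + F 2%:R.
Proof.
rewrite !big_ord_recl big_ord0 addr0 addrA; congr (F _ + F _ + F _); exact/val_inj. Qed.
Lemma sum2 (F : 'I_2 -> R) : \sum_(i < 2) F i = F 0 + F 1.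
Proof. rewrite !big_ord_recl big_ord0 addr0; congr (F _ + F _); exact/val_inj. Qed.
Lemma det3 (A : 'M[R]_3) : \det A =
  A 0 0 * (A 1 1 * A 2%:R 2%:R - A 1 2%:R * A 2%:R 1)
- A 0 1 * (A 1 0 * A 2%:R 2%:R - A 1 2%:R * A 2%:R 0)
+ A 0 2%:R * (A 1 0 * A 2%:R 1 - A 1 1 * A 2%:R 0).
Proof.
rewrite (expand_det_row _ 0) sum3 /cofactor.
rewrite !(expand_det_row _ 0) !sum2 /cofactor !det_mx11 !mxE.
have l00 : lift (0:'I_3) (0:'I_2) = 1 by exact/val_inj.
have l01 : lift (0:'I_3) (1:'I_2) = 2%:R by exact/val_inj.
have l10 : lift (1:'I_3) (0:'I_2) = 0 by exact/val_inj.
have l11 : lift (1:'I_3) (1:'I_2) = 2%:R by exact/val_inj.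
have l20 : lift (2%:R:'I_3) (0:'I_2) = 0 by exact/val_inj.
have l21 : lift (2%:R:'I_3) (1:'I_2) = 1 by exact/val_inj.
have m00 : lift (0:'I_2) (0:'I_1) = 1 by exact/val_inj.
have m10 : lift (1:'I_2) (0:'I_1) = 0 by exact/val_inj.
rewrite ?m00 ?m10 ?l00 ?l01 ?l10 ?l11 ?l20 ?l21. repeat match goal with |- context[(-1:R) ^+ ?n] => lazymatch n with | O => fail | S _ => fail | _ => let m := eval vm_compute in n in change n with m end end.
rewrite /= !expr0 !expr1. ring.
Qed.

Ltac cbool := repeat match goal with
  |- context[if ?b then _ else _] => lazymatch b with true => fail | false => fail | _ =>
      let b' := eval vm_compute in b in change b with b' end end.

Ltac ordE := repeat match goal with
  |- context[@nat_of_ord ?n ?i] => lazymatch i with Ordinal _ => fail | _ =>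
       let m := eval vm_compute in (@nat_of_ord n i) in change (@nat_of_ord n i) with m end end.

Definition dot (u v : 'cV[R]_3) := u 0 0 * v 0 0 + u 1 0 * v 1 0 + u 2%:R 0 * v 2%:R 0.
Definition mk3 (q1 q2 q3 : 'cV[R]_3) : 'M[R]_3 :=
  \matrix_(i < 3, j < 3) (if j == 0 :> nat then q1 i 0 else if j == 1 :> nat then q2 i 0 else q3 i 0).
Definition vec3 (x y z : R) : 'cV[R]_3 :=
  \col_(i < 3) (if i == 0 :> nat then x else if i == 1 :> nat then y else z).
Definition cof (Q : 'M[R]_3) := mk3 (crossv (col 1 Q) (col 2%:R Q)) (crossv (col 2%:R Q) (col 0 Q)) (crossv (col 0 Q) (col 1 Q)).

Lemma cV3_eq (u v : 'cV[R]_3) : u 0 0 = v 0 0 -> u 1 0 = v 1 0 -> u 2%:R 0 = v 2%:R 0 -> u = v.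
Proof. move=> h0 h1 h2; apply/matrixP => i j; rewrite (ord1 j); by case: (ord3 i) => [->|[->|->]]. Qed.

Lemma M3_eq (A B : 'M[R]_3) :
  A 0 0 = B 0 0 -> A 0 1 = B 0 1 -> A 0 2%:R = B 0 2%:R ->
  A 1 0 = B 1 0 -> A 1 1 = B 1 1 -> A 1 2%:R = B 1 2%:R ->
  A 2%:R 0 = B 2%:R 0 -> A 2%:R 1 = B 2%:R 1 -> A 2%:R 2%:R = B 2%:R 2%:R -> A = B.
Proof. move=> h00 h01 h02 h10 h11 h12 h20 h21 h22; apply/matrixP => i j.
by case: (ord3 i) => [->|[->|->]]; case: (ord3 j) => [->|[->|->]]. Qed.

Ltac evb := repeat match goal with
  |- context[@eq_op ?T ?x ?y] => let b := eval vm_compute in (@eq_op T x y) in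
      lazymatch b with true => change (@eq_op T x y) with true | false => change (@eq_op T x y) with false end end.

Ltac brute := rewrite /dot /cof /Defs.skew /crossv /mk3 /vec3;
  (try apply: M3_eq; try apply: cV3_eq);
  rewrite ?mxE ?sum3 ?mxE ?sum3 ?mxE ?sum3 ?mxE ?sum3 ?mxE; cbool; ordE; cbool; rewrite /= ?mxE; cbool; evb; rewrite /= ?mulr1 ?mulr0 ?mul1r ?mul0r ?addr0 ?add0r ?subr0 ?sub0r; try reflexivity.


Lemma skew_cof (Q : 'M[R]_3) (v : 'cV[R]_3) : Defs.skew (Q *m v) *m Q = cof Q *m Defs.skew v.
Proof. brute; ring. Qed.

Lemma trmx_cof (Q : 'M[R]_3) : Q^T *m cof Q = (\det Q)%:M.
Proof. rewrite det3; brute; ring. Qed.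

Lemma rotQQt (Q : 'M[R]_3) : is_rotation Q -> Q *m Q^T = 1%:M.
Proof. by case=> h _; apply: mulmx1C. Qed.

Lemma rot_cof (Q : 'M[R]_3) : is_rotation Q -> cof Q = Q.
Proof.
move=> hQ; have h2 := rotQQt hQ; case: hQ => h1 hd.
by rewrite -[cof Q]mul1mx -h2 -mulmxA trmx_cof hd mul_mx_scalar scale1r.
Qed.

Lemma rot_skew (Q : 'M[R]_3) p : is_rotation Q ->
  Q^T *m (Defs.skew p *m Q) = Defs.skew (Q^T *m p).
Proof.
move=> hQ; have h2 := rotQQt hQ.
rewrite -{1}[p]mul1mx -h2 -mulmxA skew_cof rot_cof // mulmxA; by case: hQ => -> _; rewrite mul1mx.
Qed.

Lemma col_mk0 q1 q2 q3 : col 0 (mk3 q1 q2 q3) = q1. Proof. brute. Qed.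
Lemma col_mk1 q1 q2 q3 : col 1 (mk3 q1 q2 q3) = q2. Proof. brute. Qed.
Lemma col_mk2 q1 q2 q3 : col 2%:R (mk3 q1 q2 q3) = q3. Proof. brute. Qed.
Lemma mk3_col (Q : 'M[R]_3) : Q = mk3 (col 0 Q) (col 1 Q) (col 2%:R Q). Proof. brute. Qed.
Lemma trmulE (X Y : 'M[R]_3) i j : (X^T *m Y) i j = dot (col i X) (col j Y).
Proof. by rewrite mxE sum3 /dot !mxE. Qed.
Lemma col_mulmx (X Y : 'M[R]_3) j : col j (X *m Y) = X *m col j Y.
Proof. apply/matrixP => i k; rewrite !mxE; apply: eq_bigr => l _; by rewrite !mxE. Qed.
Lemma mk3_mulv q1 q2 q3 (v : 'cV[R]_3) : mk3 q1 q2 q3 *m v = v 0 0 *: q1 + v 1 0 *: q2 + v 2%:R 0 *: q3.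
Proof. brute; ring. Qed.

Lemma dotC u v : dot u v = dot v u. Proof. brute; ring. Qed.
Lemma dotZl k u v : dot (k *: u) v = k * dot u v. Proof. brute; ring. Qed.
Lemma dotZr k u v : dot u (k *: v) = k * dot u v. Proof. brute; ring. Qed.
Lemma dot_crossl u v : dot u (crossv u v) = 0. Proof. brute; ring. Qed.
Lemma dot_crossr u v : dot v (crossv u v) = 0. Proof. brute; ring. Qed.
Lemma dot_cyc u v w : dot u (crossv v w) = dot w (crossv u v). Proof. brute; ring. Qed.
Lemma crossZl (k : R) (u v : 'cV[R]_3) : crossv (k *: u) v = k *: crossv u v. Proof. brute; ring. Qed.
Lemma crossZr (k : R) (u v : 'cV[R]_3) : crossv u (k *: v) = k *: crossv u v. Proof. brute; ring. Qed.
Lemma crossDr (u v w : 'cV[R]_3) : crossv u (v + w) = crossv u v + crossv u w. Proof. brute; ring. Qed.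
Lemma cross_self (u : 'cV[R]_3) : crossv u u = 0. Proof. brute; ring. Qed.
Lemma bac_cab u v w : crossv u (crossv v w) = dot u w *: v - dot u v *: w. Proof. brute; ring. Qed.
Lemma lagrange u v : dot (crossv u v) (crossv u v) = dot u u * dot v v - dot u v ^+ 2.
Proof. brute; ring. Qed.
Lemma dot_ge0 u : 0 <= dot u u.
Proof. by rewrite /dot !addr_ge0 // -expr2 sqr_ge0. Qed.
Lemma dot_eq0 u : dot u u = 0 -> u = 0.
Proof.
rewrite /dot => h.
have h0 : 0 <= u 0 0 * u 0 0 by rewrite -expr2 sqr_ge0.
have h1 : 0 <= u 1 0 * u 1 0 by rewrite -expr2 sqr_ge0.
have h2 : 0 <= u 2%:R 0 * u 2%:R 0 by rewrite -expr2 sqr_ge0.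
apply: cV3_eq; rewrite mxE; apply/eqP; rewrite -sqrf_eq0 expr2; apply/eqP; lra.
Qed.
Lemma det_mk q1 q2 q3 : \det (mk3 q1 q2 q3) = dot q3 (crossv q1 q2).
Proof. rewrite det3; brute; ring. Qed.
Lemma vnorm_dot a : vnorm a = Num.sqrt (dot a a).
Proof. by rewrite /vnorm sum3 /dot !expr2. Qed.

Lemma rot_mk q1 q2 q3 : dot q1 q1 = 1 -> dot q2 q2 = 1 -> dot q3 q3 = 1 ->
  dot q1 q2 = 0 -> dot q1 q3 = 0 -> dot q2 q3 = 0 -> crossv q1 q2 = q3 ->
  is_rotation (mk3 q1 q2 q3).
Proof.
move=> h11 h22 h33 h12 h13 h23 hc; split; last by rewrite det_mk hc.
apply: M3_eq; rewrite trmulE !mxE ?col_mk0 ?col_mk1 ?col_mk2; evb => //=;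
  rewrite ?(dotC q2 q1) ?(dotC q3 q1) ?(dotC q3 q2) //.
Qed.

Lemma rot_facts (Q : 'M[R]_3) : is_rotation Q ->
  [/\ dot (col 0 Q) (col 0 Q) = 1, dot (col 1 Q) (col 1 Q) = 1, dot (col 2%:R Q) (col 2%:R Q) = 1,
      dot (col 0 Q) (col 1 Q) = 0 & dot (col 1 Q) (col 2%:R Q) = 0] /\
  [/\ dot (col 0 Q) (col 2%:R Q) = 0, crossv (col 0 Q) (col 1 Q) = col 2%:R Q &
      crossv (col 2%:R Q) (col 0 Q) = col 1 Q].
Proof.
move=> hQ; have hc := rot_cof hQ; case: (hQ) => h1 _.
have E i j : dot (col i Q) (col j Q) = (1%:M : 'M[R]_3) i j by rewrite -trmulE h1.
rewrite !E !mxE; evb => /=; split; split => //.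
- by rewrite -[in RHS]hc col_mk2.
- by rewrite -[in RHS]hc col_mk1.
Qed.

Section QR.
Variable A : 'M[R]_3.
Definition a1 := col 0 A.
Definition a2 := col 1 A.
Definition cc := crossv a1 a2.
Definition NN := Num.sqrt (dot a1 a1).
Definition MM := Num.sqrt (dot cc cc).
Definition q1 := NN^-1 *: a1.
Definition q3 := MM^-1 *: cc.
Definition q2 := crossv q3 q1.
Definition Q0 := mk3 q1 q2 q3.

Lemma QR_exist : NN != 0 -> cc != 0 ->
  [/\ is_rotation Q0, upper_tri (Q0^T *m A), 0 < (Q0^T *m A) 0 0 & 0 < (Q0^T *m A) 1 1].
Proof.
move=> hN hc.
have N0 : 0 < NN by rewrite lt_def hN sqrtr_ge0.
have hcc : dot cc cc != 0 by apply/eqP => /dot_eq0/eqP; apply/negP.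
have M0 : 0 < MM by rewrite sqrtr_gt0 lt_def hcc dot_ge0.
have hN2 : NN ^+ 2 = dot a1 a1 by rewrite sqr_sqrtr // dot_ge0.
have hM2 : MM ^+ 2 = dot cc cc by rewrite sqr_sqrtr // dot_ge0.
have d11 : dot q1 q1 = 1.
  rewrite /q1 dotZl dotZr -hN2; field; exact: hN.
have d33 : dot q3 q3 = 1.
  rewrite /q3 dotZl dotZr -hM2; field; by rewrite gt_eqF.
have d13 : dot q1 q3 = 0 by rewrite /q1 /q3 dotZl dotZr /cc dot_crossl !mulr0.
have d12 : dot q1 q2 = 0 by rewrite /q2 dot_crossr.
have d23 : dot q2 q3 = 0 by rewrite dotC /q2 dot_crossl.
have d22 : dot q2 q2 = 1 by rewrite /q2 lagrange d33 d11 dotC d13; ring.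
have c12 : crossv q1 q2 = q3 by rewrite /q2 bac_cab d11 d13 scale1r scale0r subr0.
have ea1 : a1 = NN *: q1 by rewrite /q1 scalerA mulfV // scale1r.
split.
- exact: rot_mk.
- move=> i j; rewrite trmulE /Q0.
  case: (ord3 i) => [->|[->|->]]; case: (ord3 j) => [->|[->|->]] //;
  rewrite ?col_mk0 ?col_mk1 ?col_mk2 => _.
  + by rewrite -/a1 ea1 dotZr dotC d12 mulr0.
  + by rewrite -/a1 ea1 dotZr dotC d13 mulr0.
  + by rewrite -/a2 /q3 dotZl /cc dotC dot_crossr mulr0.
- rewrite trmulE col_mk0 -/a1 /q1 dotZl -hN2 expr2 mulrA mulVf // mul1r //.
- rewrite trmulE col_mk1 -/a2 /q2 dotC dot_cyc /q3 /q1 crossZr dotZl dotZr dot_cyc -/cc -hM2.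
  rewrite expr2 [MM^-1 * _]mulrA mulVf ?gt_eqF // mul1r; apply: mulr_gt0 => //; by rewrite invr_gt0.
Qed.

Lemma QR_unique (Q U1 : 'M[R]_3) : is_rotation Q -> upper_tri U1 -> 0 < U1 0 0 -> 0 < U1 1 1 ->
  A = Q *m U1 -> Q = Q0.
Proof.
move=> hQ hU h00 h11 hA.
case: (rot_facts hQ) => [[d11 d22 d33 d12 d23] [d13 c12 c31]].
have u10 : U1 1 0 = 0 by apply: hU.
have u20 : U1 2%:R 0 = 0 by apply: hU.
have u21 : U1 2%:R 1 = 0 by apply: hU.
set p1 := col 0 Q in d11 d12 d13 c12 c31 *; set p2 := col 1 Q in d22 d12 d23 c12 c31 *;
set p3 := col 2%:R Q in d33 d13 d23 c12 c31 *.
have eQ : Q = mk3 p1 p2 p3 by exact: mk3_col.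
have ea1 : a1 = U1 0 0 *: p1.
  rewrite /a1 hA col_mulmx eQ mk3_mulv !mxE u10 u20 !scale0r !addr0 //.
have ea2 : a2 = U1 0 1 *: p1 + U1 1 1 *: p2.
  rewrite /a2 hA col_mulmx eQ mk3_mulv !mxE u21 !scale0r !addr0 //.
have eN : NN = U1 0 0.
  by rewrite /NN ea1 dotZl dotZr d11 mulr1 -expr2 sqrtr_sqr gtr0_norm.
have eq1 : q1 = p1 by rewrite /q1 ea1 eN scalerA mulVf ?gt_eqF // scale1r.
have ec : cc = (U1 0 0 * U1 1 1) *: p3.
  by rewrite /cc ea1 ea2 crossZl crossDr !crossZr cross_self c12 scaler0 add0r !scalerA.
have eM : MM = U1 0 0 * U1 1 1.
  by rewrite /MM ec dotZl dotZr d33 mulr1 -expr2 sqrtr_sqr gtr0_norm // mulr_gt0.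
have eq3 : q3 = p3 by rewrite /q3 ec eM scalerA mulVf ?gt_eqF ?mulr_gt0 // scale1r.
have eq2 : q2 = p2 by rewrite /q2 eq1 eq3 c31.
by rewrite /Q0 eq1 eq2 eq3.
Qed.
End QR.
Definition pvec (C U1 : 'M[R]_3) :=
  vec3 ((C 2%:R 1 + (- C 2%:R 0 / U1 0 0) * U1 0 1) / U1 1 1) (- C 2%:R 0 / U1 0 0) (C 1 0 / U1 0 0).

Lemma p_exist (C U1 : 'M[R]_3) : upper_tri U1 -> U1 0 0 != 0 -> U1 1 1 != 0 ->
  upper_tri (C - Defs.skew (pvec C U1) *m U1).
Proof.
move=> hU hr ht.
have u10 : U1 1 0 = 0 by apply: hU.
have u20 : U1 2%:R 0 = 0 by apply: hU.
have u21 : U1 2%:R 1 = 0 by apply: hU.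
move=> i j; case: (ord3 i) => [->|[->|->]]; case: (ord3 j) => [->|[->|->]] // _;
  rewrite /pvec; brute; rewrite ?u10 ?u20 ?u21; field; rewrite ?hr ?ht //=.
Qed.

Lemma p_unique (C U1 : 'M[R]_3) p : upper_tri U1 -> U1 0 0 != 0 -> U1 1 1 != 0 ->
  upper_tri (C - Defs.skew p *m U1) -> p = pvec C U1.
Proof.
move=> hU hr ht hP.
have u10 : U1 1 0 = 0 by apply: hU.
have u20 : U1 2%:R 0 = 0 by apply: hU.
have u21 : U1 2%:R 1 = 0 by apply: hU.
have := hP 1 0 erefl; have := hP 2%:R 0 erefl; have := hP 2%:R 1 erefl.
brute; rewrite ?u10 ?u20 ?u21 => e21 e20 e10.
have h2 : p 2%:R 0 = C 1 0 / U1 0 0.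
  by apply: (mulIf hr); rewrite divfK //; move/eqP: e10; rewrite subr_eq0 => /eqP ->; ring.
have h1 : p 1 0 = - C 2%:R 0 / U1 0 0.
  by apply: (mulIf hr); rewrite divfK //; move/eqP: e20; rewrite subr_eq0 => /eqP ->; ring.
have h0 : p 0 0 = (C 2%:R 1 + (- C 2%:R 0 / U1 0 0) * U1 0 1) / U1 1 1.
  apply: (mulIf ht); rewrite divfK // -h1; move/eqP: e21; rewrite subr_eq0 => /eqP ->; ring.
rewrite /pvec; brute; by rewrite ?h0 ?h1 ?h2.
Qed.
End S.

Theorem theorem1 (R : rcfType) (Xi : 'M[R]_(3 + 3, 3)) :
  let alpha1 := col 0 (usubmx Xi) in
  let alpha2 := col 1 (usubmx Xi) in
  vnorm alpha1 != 0 -> crossv alpha1 alpha2 != 0 ->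
  exists! SU : 'M[R]_(3 + 3) * 'M[R]_(3 + 3, 3),
    [/\ is_screw SU.1, is_U_form SU.2 & Xi = SU.1 *m SU.2].
Proof.
move=> alpha1 alpha2 hN hc.
have hN' : NN (usubmx Xi) != 0 by move: hN; rewrite vnorm_dot.
have hc' : cc (usubmx Xi) != 0 := hc.
case: (QR_exist hN' hc') => hrot hUt hr ht.
set A := usubmx Xi in hrot hUt hr ht *. set B := dsubmx Xi.
set Q := Q0 A in hrot hUt hr ht *. set U1 := Q^T *m A in hUt hr ht *.
set C := Q^T *m B. set p' := pvec C U1. set U2 := C - Defs.skew p' *m U1.
have hQQt := rotQQt hrot. case: (hrot) => hQtQ _.
exists (screw_mx Q (Q *m p'), col_mx U1 U2); split.
- split => /=.
  + by exists Q, (Q *m p').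
  + rewrite /is_U_form col_mxKu col_mxKd; split => //; split => //.
    by apply: p_exist => //; rewrite gt_eqF.
  + rewrite -[Xi in LHS]vsubmxK /screw_mx mul_block_col mul0mx addr0 -/A -/B.
    congr col_mx; first by rewrite /U1 mulmxA hQQt mul1mx.
    rewrite skew_cof rot_cof // /U2 mulmxBr /C !mulmxA hQQt mul1mx addrC subrK //.
- move=> [S U] /= [[Q' [p [hrot' ->]]] hU hX].
  rewrite -[U]vsubmxK /screw_mx mul_block_col mul0mx addr0 -(vsubmxK Xi) in hX.
  case/eq_col_mx: hX => hA hB.
  case: hU => hU1 [hU2 [h1 h2]].
  have eQ : Q' = Q := QR_unique hrot' hU1 h1 h2 hA.
  rewrite eQ in hA hB *.
  have eU1 : usubmx U = U1 by rewrite /U1 /A hA mulmxA hQtQ mul1mx.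
  have eU2 : dsubmx U = C - Defs.skew (Q^T *m p) *m U1.
    rewrite /C /B hB mulmxDr mulmxA rot_skew // mulmxA hQtQ mul1mx eU1.
    by rewrite addrC addKr.
  have ep : Q^T *m p = p'.
    apply: p_unique => //; rewrite ?gt_eqF // -eU2 //.
  have ep2 : p = Q *m p' by rewrite -ep mulmxA hQQt mul1mx.
  by rewrite ep2 -[U]vsubmxK eU1 eU2 ep.
Qed.
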